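(* For every natural number $n\geq 2$: (i) $\chi_d^t(F_n\star K_n)=n+3$; (ii) $\chi_d^t(F_n\star C_{2n})=5$.
   Context: All graphs are simple and finite. A total dominator coloring (TD-coloring) of a graph $G$ with no isolated vertex is a proper vertex coloring of $G$ in which every vertex of $G$ is adjacent to every vertex of some color class. The total dominator chromatic number $\chi_d^t(G)$ is the minimum number of colors in a TD-coloring of $G$. The neighbourhood corona $G_1\star G_2$ is the graph obtained by taking one copy of $G_1$ and $|V(G_1)|$ copies of $G_2$, and, for each $i$, joining every neighbour (in $G_1$) of the $i$-th vertex of $G_1$ to every vertex of the $i$-th copy of $G_2$. The friendship graph $F_n$ ($n\ge 2$) is obtained by joining $n$ copies of the cycle $C_3$ at a common vertex. $K_n$ is the complete graph and $C_{2n}$ the cycle on $2n$ vertices. *)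

(* Defs.v *)
(* Simple graphs are symmetric irreflexive relations on a finType. *)
From mathcomp Require Import all_boot.
Set Implicit Arguments. Unset Strict Implicit. Unset Printing Implicit Defensive.

Definition complete_rel (n : nat) : rel 'I_n := fun x y => x != y.

Definition cycle_rel (m : nat) : rel 'I_m :=
  fun x y => ((x.+1 %% m) == y) || ((y.+1 %% m) == x).

(* Friendship graph F_n: center None, triangle i has vertices Some (i,false),
   Some (i,true); the center is joined to all, and the two non-central
   vertices of each triangle are joined. *)
Definition friendship_rel (n : nat) : rel (option ('I_n * bool)) :=
  fun x y => match x, y with
  | None, None => false
  | None, Some _ => true
  | Some _, None => true
  | Some (i, b), Some (j, c) => (i == j) && (b != c)
  end.

(* Neighbourhood corona G1 * G2: vertex set V1 + (V1 x V2); inr (i, x) is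
   vertex x of the i-th copy of G2. *)
Definition ncorona (V1 V2 : finType) (e1 : rel V1) (e2 : rel V2)
  : rel (V1 + (V1 * V2)) :=
  fun a b => match a, b with
  | inl u, inl v => e1 u v
  | inl u, inr (i, _) => e1 u i
  | inr (i, _), inl u => e1 i u
  | inr (i, x), inr (j, y) => (i == j) && e2 x y
  end.

Definition td_coloring (V : finType) (e : rel V) (k : nat) (c : V -> 'I_k) : Prop :=
  (forall x y, e x y -> c x != c y) /\
  (forall v, exists j : 'I_k, (exists u, c u = j) /\ (forall u, c u = j -> e v u)).

Definition td_chromatic_number_is (V : finType) (e : rel V) (k : nat) : Prop :=
  (exists c : V -> 'I_k, td_coloring e c) /\
  (forall (k' : nat) (c : V -> 'I_k'), td_coloring e c -> k <= k').

(* Main.v *)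
Require Import Defs.
From mathcomp Require Import all_boot zify.
Set Implicit Arguments. Unset Strict Implicit. Unset Printing Implicit Defensive.

Lemma lower n (i0 : 'I_n) (V2 : finType) (e2 : rel V2) (x0 : V2) p k
  (c : option ('I_n * bool) + option ('I_n * bool) * V2 -> 'I_k) :
  td_coloring (ncorona (@friendship_rel n) e2) c ->
  p <= #|(fun y => c (inr (None, y))) @: [set: V2]| ->
  p <= #|(fun y => c (inr (Some (i0, true), y))) @: [set: V2]| ->
  p + 3 <= k.
Proof.
move=> [prop dom] HS HT.
set S := _ @: _ in HS. set T := _ @: _ in HT.
set w := (@None ('I_n * bool)). set v0 := Some (i0, false). set v1 := Some (i0, true).
have n01 : (v0 == v1) = false by apply/eqP; case.
have c0S : c (inl v0) \notin S.
  apply/imsetP => -[y _ Hy]; have := prop (inl v0) (inr (None, y)) isT.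
  by rewrite Hy eqxx.
have c1S : c (inl v1) \notin S.
  apply/imsetP => -[y _ Hy]; have := prop (inl v1) (inr (None, y)) isT.
  by rewrite Hy eqxx.
have c01 : c (inl v0) != c (inl v1) by apply: prop; rewrite /= eqxx.
have cw0 : c (inl w) != c (inl v0) by apply: prop.
have cw1 : c (inl w) != c (inl v1) by apply: prop.
rewrite leqNgt; apply/negP => Hk.
set A := c (inl v0) |: (c (inl v1) |: S).
have cA : #|A| = #|S| + 2.
  rewrite /A cardsU1 cardsU1 in_setU1 (negbTE c01) /= c0S c1S /=; lia.
have cAk : #|A| <= k by have := max_card A; rewrite card_ord.
have HA : A = setT.
  apply/eqP; rewrite eqEcard subsetT cardsT card_ord; lia.
have cwS : c (inl w) \in S.
  have : c (inl w) \in A by rewrite HA inE.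
  by rewrite !in_setU1 (negbTE cw0) (negbTE cw1).
have c0T : c (inl v0) \notin T.
  apply/imsetP => -[y _ Hy]; have := prop (inl v0) (inr (v1, y)).
  by rewrite Hy eqxx /= eqxx => /(_ isT).
have cwT : c (inl w) \notin T.
  apply/imsetP => -[y _ Hy]; have := prop (inl w) (inr (v1, y)) isT.
  by rewrite Hy eqxx.
set B := c (inl w) |: (c (inl v0) |: T).
have cB : #|B| = #|T| + 2.
  rewrite /B cardsU1 cardsU1 in_setU1 (negbTE cw0) /= c0T cwT /=; lia.
have HB : B = setT.
  apply/eqP; rewrite eqEcard subsetT cardsT card_ord; lia.
have c1T : c (inl v1) \in T.
  have : c (inl v1) \in B by rewrite HB inE.
  by rewrite !in_setU1 eq_sym (negbTE cw1) eq_sym (negbTE c01).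
have [j [[u Hu] Hall]] := dom (inr (v0, x0)).
have : j \in A by rewrite HA inE.
rewrite !in_setU1 => /or3P [/eqP Hj|/eqP Hj|Hj].
- by have := Hall (inl v0) (esym Hj); rewrite /= eqxx.
- move: c1T; rewrite -Hj => /imsetP [y _ Hy].
  by have := Hall _ (esym Hy); rewrite /= n01.
- move: Hj => /imsetP [y _ Hy].
  by have := Hall _ (esym Hy).
Qed.
Lemma upper (V : finType) (e : rel V) k (f : V -> nat) :
  (forall v, f v < k) -> (forall x y, e x y -> f x != f y) ->
  (forall v, exists u0, forall u, f u = f u0 -> e v u) ->
  exists c : V -> 'I_k, td_coloring e c.
Proof.
move=> Hk Hp Hd; exists (fun v => Ordinal (Hk v)); split.
  by move=> x y /Hp; apply: contra => /eqP [->].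
move=> v; have [u0 H] := Hd v; exists (Ordinal (Hk u0)); split; first by exists u0.
by move=> u [] /H.
Qed.

Definition f1 n (v : option ('I_n * bool) + option ('I_n * bool) * 'I_n) : nat :=
  match v with inl None => n | inl (Some (_, b)) => n + 1 + b | inr (_, y) => val y end.

Lemma up1 n (i0 : 'I_n) : exists c : _ -> 'I_(n + 3),
  td_coloring (ncorona (@friendship_rel n) (@complete_rel n)) c.
Proof.
apply: (@upper _ _ _ (@f1 n)).
- move=> [[[i b]|]|[u y]] /=; [by case: b => /=; lia|lia|by have := ltn_ord y; lia].
- move=> [[[i b]|]|[[[i b]|] y]] [[[j d]|]|[[[j d]|] z]] //=.
  9: by move=> /andP[_ H].
  1: by move=> /andP[_ H]; move: H; case: b; case: d => //= _; lia.
  1-8: move=> _; try (have := ltn_ord y); try (have := ltn_ord z); try (case: b); try (case: d); rewrite /=; lia.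
- move=> [[[i b]|]|[[[i b]|] y]];
    [exists (inl None)|exists (inl (Some (i0, false)))|exists (inl None)|exists (inl (Some (i0, false)))];
    move=> [[[j d]|]|[[[j d]|] z]] //=; try (have := ltn_ord z); try (case: d); rewrite /=; lia.
Qed.

Definition f2 n (v : option ('I_n * bool) + option ('I_n * bool) * 'I_(2 * n)) : nat :=
  match v with inl None => 2 | inl (Some (_, b)) => 3 + b | inr (_, y) => val y %% 2 end.

Lemma par n (y z : 'I_(2 * n)) : cycle_rel y z -> y %% 2 != z %% 2.
Proof.
have key : forall a b : nat, a.+1 %% (2 * n) = b -> a %% 2 != b %% 2.
  move=> a b <-; rewrite (modn_dvdm a.+1 (dvdn_mulr n (dvdnn 2))) !modn2 /=.
  by case: odd.
rewrite /cycle_rel => /orP [/eqP/key //|/eqP/key]; by rewrite eq_sym.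
Qed.

Lemma up2 n (i0 : 'I_n) : exists c : _ -> 'I_5,
  td_coloring (ncorona (@friendship_rel n) (@cycle_rel (2 * n))) c.
Proof.
apply: (@upper _ _ _ (@f2 n)).
- move=> [[[i b]|]|[u y]] /=; [by case: b|by []|by have := ltn_pmod y (isT : 0 < 2); lia].
- move=> [[[i b]|]|[[[i b]|] y]] [[[j d]|]|[[[j d]|] z]] //=.
  9: exact: par.
  7: by move=> /andP[_ /par].
  1: by move=> /andP[_ H]; move: H; case: b; case: d.
  1-6: move=> _; try (have := ltn_pmod y (isT : 0 < 2)); try (have := ltn_pmod z (isT : 0 < 2)); try (case: b); try (case: d); rewrite /=; lia.
- move=> [[[i b]|]|[[[i b]|] y]];
    [exists (inl None)|exists (inl (Some (i0, false)))|exists (inl None)|exists (inl (Some (i0, false)))];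
    move=> [[[j d]|]|[[[j d]|] z]] //=; try (have := ltn_pmod z (isT : 0 < 2)); try (case: d); rewrite /=; lia.
Qed.

Lemma cardK n u k
  (c' : option ('I_n * bool) + option ('I_n * bool) * 'I_n -> 'I_k) :
  td_coloring (ncorona (@friendship_rel n) (@complete_rel n)) c' ->
  n <= #|(fun y => c' (inr (u, y))) @: [set: 'I_n]|.
Proof.
move=> [prop _]; rewrite card_imset ?cardsT ?card_ord //.
move=> y z H; apply/eqP; apply: contraT => Hyz.
by have := prop (inr (u, y)) (inr (u, z)); rewrite /= eqxx /complete_rel Hyz H eqxx => /(_ isT).
Qed.

Lemma cardC n u k
  (c' : option ('I_n * bool) + option ('I_n * bool) * 'I_(2 * n) -> 'I_k) :
  2 <= n ->
  td_coloring (ncorona (@friendship_rel n) (@cycle_rel (2 * n))) c' ->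
  2 <= #|(fun y => c' (inr (u, y))) @: [set: 'I_(2 * n)]|.
Proof.
move=> hn [prop _].
have h0 : 0 < 2 * n by lia.
have h1 : 1 < 2 * n by lia.
set y0 := Ordinal h0. set y1 := Ordinal h1.
have : c' (inr (u, y0)) != c' (inr (u, y1)).
  apply: prop; rewrite /= eqxx /= /cycle_rel /= modn_small //.
move=> Hne; have := cards2 (c' (inr (u, y0))) (c' (inr (u, y1))).
rewrite Hne => E; apply: (@leq_trans #|[set c' (inr (u, y0)); c' (inr (u, y1))]|); first by rewrite E.
apply: subset_leq_card.
by apply/subsetP => x; rewrite !inE => /orP [] /eqP ->; apply: imset_f.
Qed.

Theorem mainTheorem5 (n : nat) (hn : 2 <= n) :
  td_chromatic_number_is (ncorona (@friendship_rel n) (@complete_rel n)) (n + 3) /\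
  td_chromatic_number_is (ncorona (@friendship_rel n) (@cycle_rel (2 * n))) 5.
Proof.
have h0 : 0 < n by lia.
set i0 := Ordinal h0.
split; split.
- exact: up1 i0.
- move=> k c H; apply: (@lower n i0 _ _ i0 n k c H).
  + move: H; exact: cardK.
  + move: H; exact: cardK.
- exact: up2 i0.
- have h2 : 0 < 2 * n by lia.
  move=> k c H; apply: (@lower n i0 _ _ (Ordinal h2) 2 k c H).
  + exact: cardC.
  + exact: cardC.
Qed.
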